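(* Let $X_1,\dots,X_d$ be discrete random variables, $X_j$ taking values in $\{0,1,\dots,r_j\}$, fix $M\subseteq\{1,\dots,d\}$, and let $\pi=p(M)$ be the (strictly positive) vector of joint probabilities of $(X_j)_{j\in M}$. Let $\mathcal V\subseteq\mathcal P(M)$, $\mathcal I\subseteq\mathcal V$, $\mathcal R=\mathcal V\setminus\mathcal I$, and let $\mathcal H$ be a collection of interaction blocks from $\mathcal P(M)\setminus\mathcal V$ whose total number of parameters (columns of $G_{\mathcal H}$) equals that of $\mathcal I$. Put $$A=F_{\mathcal H\mathcal H}-F_{\mathcal H\mathcal R}F_{\mathcal R\mathcal R}^{-1}F_{\mathcal R\mathcal H},\qquad B=F_{\mathcal H\mathcal H}-F_{\mathcal H\mathcal V}F_{\mathcal V\mathcal V}^{-1}F_{\mathcal V\mathcal H},\qquad J=A^{-1}B,$$ $$Q_{\mathcal I\mathcal H\mid\mathcal R}=F_{\mathcal I\mathcal H}-F_{\mathcal I\mathcal R}F_{\mathcal R\mathcal R}^{-1}F_{\mathcal R\mathcal H}.$$ Then the spectral radius (maximum absolute eigenvalue) of $J$ is strictly less than $1$, except when $Q_{\mathcal I\mathcal H\mid\mathcal R}$ is not of full rank (in which case it equals $1$).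
   Context: Notation: $\mathcal P(M)$ is the set of nonempty subsets of $M$. For $\emptyset\ne I\subseteq M$, $G(I,M)=\bigotimes_{j\in M}G_j$ where $G_j$ is the identity matrix of order $r_j+1$ with its first column removed if $j\in I$, and $G_j=\mathbf 1_{r_j+1}$ otherwise (cells ordered lexicographically). An ''interaction block'' is either $G(v,M)$ for some $v\in\mathcal P(M)$, or, for disjoint $t,h$ with $t\cup h=v$ and a vector $j_h$ of categories all different from $0$, the submatrix $G_{t,h}(j_h)$ of $G(v,M)$ consisting of the columns where the variables in $h$ equal $j_h$. For a collection $\mathcal X$ of blocks, $G_{\mathcal X}$ is the matrix obtained by placing the blocks side by side; with $\Omega=\mathrm{diag}(\pi)-\pi\pi'$, $F_{\mathcal X\mathcal Y}=G_{\mathcal X}'\Omega G_{\mathcal Y}$. When $\mathcal R=\emptyset$ the terms involving $F_{\mathcal R\mathcal R}^{-1}$ are absent. *)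

(* Defs.v *)
(* pure linear algebra over an arbitrary real closed field R
   (the reals being the motivating instance); eigenvalues live in R[i]. *)
From HB Require Import structures.
From mathcomp Require Import all_boot all_order all_algebra.
From mathcomp.real_closed Require Import complex.
Set Implicit Arguments. Unset Strict Implicit. Unset Printing Implicit Defensive.
Import Order.TTheory GRing.Theory Num.Theory.
Local Open Scope ring_scope.

(* Variables are indexed by 'I_d (so X_j, j = 0..d-1); X_j takes
   values in {0,...,r j}.  A cell of the marginal table of (X_j)_{j in M}
   is represented by a dependent function x with x j = 0 for j \notin M. *)
Section Cells.
Variables (d : nat) (r : 'I_d -> nat) (M : {set 'I_d}).

Definition cell := {x : {dffun forall j : 'I_d, 'I_(r j).+1} |
                     [forall j, (j \notin M) ==> (nat_of_ord (x j) == 0%N)]}.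

Definition supp (x : cell) : {set 'I_d} := [set j | nat_of_ord (val x j) != 0%N].

(* Parameters (= columns of the matrices G(v,M), v in P(M)) are indexed by
   the pair (v, j_v), j_v a vector of nonzero categories on v; this pair is
   encoded as the cell x with supp x = v and x = j_v on v.
   Entry of G(v,M) in row (cell) y, column (parameter) x, with v = supp x:
   the tensor product of the columns of G_j = (I without first column) for
   j in v and of 1 for j \notin v, i.e. prod_{j in v} [y_j == x_j]. *)
Definition Gentry (R : nzRingType) (y x : cell) : R :=
  (\prod_(j in supp x) ((nat_of_ord (val y j) == nat_of_ord (val x j)) %:R))%R.

Definition cols (V : {set {set 'I_d}}) : {set cell} := [set x | supp x \in V].

(* An interaction block from P(M): either G(v,M) or G_{t,h}(j_h) with
   t,h disjoint, t :|: h = v, j_h a vector of nonzero categories on h.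
   It is given by v and by a cell jh with supp jh = h (subset of v);
   jh with empty support (h = set0, t = v) gives G(v,M) itself. *)
Definition iblock := ({set 'I_d} * cell)%type.
Definition ib_v (b : iblock) : {set 'I_d} := b.1.
Definition ib_jh (b : iblock) : cell := b.2.

Definition iblock_ok (b : iblock) : bool :=
  [&& ib_v b != set0, ib_v b \subset M & supp (ib_jh b) \subset ib_v b].

Definition bcols (b : iblock) : {set cell} :=
  [set x | (supp x == ib_v b) &&
           [forall j, (j \in supp (ib_jh b)) ==>
                      (nat_of_ord (val x j) == nat_of_ord (val (ib_jh b) j))]].

Definition hcols (H : seq iblock) : {set cell} := \bigcup_(b <- H) bcols b.

Variable R : rcfType.

(* G_S for a set S of parameters: rows are the cells, columns the
   parameters in S (both in the order given by enum). *)
Definition Gmx (S : {set cell}) : 'M[R]_(#|{: cell}|, #|S|) :=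
  \matrix_(i, k) Gentry R (enum_val i) (enum_val k).

Definition Omega (pi : cell -> R) : 'M[R]_(#|{: cell}|) :=
  \matrix_(i, k) ((i == k)%:R * pi (enum_val i) - pi (enum_val i) * pi (enum_val k)).

Definition Fmx (pi : cell -> R) (S T : {set cell}) : 'M[R]_(#|S|, #|T|) :=
  (Gmx S)^T *m Omega pi *m Gmx T.

(* A = F_HH - F_HR F_RR^-1 F_RH  (for RR = set0 the second term is the
   product through a 0-dimensional matrix, i.e. 0, i.e. absent) *)
Definition Amx (pi : cell -> R) (RR : {set {set 'I_d}}) (H : seq iblock) :=
  Fmx pi (hcols H) (hcols H)
  - Fmx pi (hcols H) (cols RR) *m invmx (Fmx pi (cols RR) (cols RR))
      *m Fmx pi (cols RR) (hcols H).

Definition Bmx (pi : cell -> R) (V : {set {set 'I_d}}) (H : seq iblock) :=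
  Fmx pi (hcols H) (hcols H)
  - Fmx pi (hcols H) (cols V) *m invmx (Fmx pi (cols V) (cols V))
      *m Fmx pi (cols V) (hcols H).

Definition Jmx (pi : cell -> R) (V I : {set {set 'I_d}}) (H : seq iblock) :=
  invmx (Amx pi (V :\: I) H) *m Bmx pi V H.

Definition Qmx (pi : cell -> R) (I RR : {set {set 'I_d}}) (H : seq iblock) :=
  Fmx pi (cols I) (hcols H)
  - Fmx pi (cols I) (cols RR) *m invmx (Fmx pi (cols RR) (cols RR))
      *m Fmx pi (cols RR) (hcols H).

End Cells.

(* Spectral radius of a real square matrix: the maximum modulus of its
   (complex) eigenvalues, i.e. of the roots of its characteristic
   polynomial in R[i]; 0 for the empty matrix. *)
Definition spectral_radius (R : rcfType) (n : nat) (A : 'M[R]_n) : R[i] :=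
  \big[Num.max/0]_(z <- sval (closed_field_poly_normal
        (char_poly (map_mx (fun a : R => (a%:C)%C) A)))) `|z|.

(* Main.v *)
Require Import Defs.
From HB Require Import structures.
From mathcomp Require Import all_boot all_order all_algebra.
From mathcomp.real_closed Require Import complex.
From mathcomp Require Import ring lra.
Set Implicit Arguments. Unset Strict Implicit. Unset Printing Implicit Defensive.
Import Order.TTheory GRing.Theory Num.Theory.
Local Open Scope ring_scope.

Section LAs.
Variable R : rcfType.

Definition qr n (M : 'M[R]_n) (u : 'rV_n) := (u *m M *m u^T) 0 0.

Lemma unit_of_inj n (M : 'M[R]_n) :
  (forall v : 'rV_n, v *m M = 0 -> v = 0) -> M \in unitmx.
Proof.
move=> h; rewrite -row_free_unit -kermx_eq0; apply/rowV0P => v /sub_kermxP.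
exact: h.
Qed.

Variable N : nat.
Variable Om : 'M[R]_N.
Hypothesis OmT : Om^T = Om.

Definition Fm a b (X : 'M[R]_(N,a)) (Y : 'M[R]_(N,b)) := X^T *m Om *m Y.
Fact Pm_key : unit. Proof. exact: tt. Qed.
Definition Pm a (X : 'M[R]_(N,a)) : 'M[R]_N :=
  locked_with Pm_key (X *m invmx (Fm X X) *m X^T).
Lemma PmE a (X : 'M[R]_(N,a)) : Pm X = X *m invmx (Fm X X) *m X^T.
Proof. by rewrite /Pm unlock. Qed.

Lemma FmT a b (X : 'M[R]_(N,a)) (Y : 'M[R]_(N,b)) : (Fm X Y)^T = Fm Y X.
Proof. by rewrite /Fm !trmx_mul trmxK OmT mulmxA. Qed.

Lemma PmT a (X : 'M[R]_(N,a)) : (Pm X)^T = Pm X.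
Proof. by rewrite PmE !trmx_mul trmxK trmx_inv FmT mulmxA. Qed.

Lemma PmOmX a (X : 'M[R]_(N,a)) : Fm X X \in unitmx -> Pm X *m Om *m X = X.
Proof.
move=> u; have e : X^T *m (Om *m X) = Fm X X by rewrite /Fm mulmxA.
by rewrite PmE -!mulmxA e mulVmx // mulmx1.
Qed.

Lemma PmOmPm a (X : 'M[R]_(N,a)) : Fm X X \in unitmx -> Pm X *m Om *m Pm X = Pm X.
Proof.
by move=> u; rewrite {2}PmE !mulmxA PmOmX // -PmE.
Qed.

Lemma schur_gram a b (X : 'M[R]_(N,a)) (Y : 'M[R]_(N,b)) : Fm X X \in unitmx ->
  Fm Y Y - Fm Y X *m invmx (Fm X X) *m Fm X Y =
  let W := Y - Pm X *m Om *m Y in W^T *m Om *m W.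
Proof.
move=> u /=.
have -> : (Y - Pm X *m Om *m Y)^T = Y^T - Y^T *m Om *m Pm X.
  by rewrite linearB /= trmx_mul (trmx_mul (Pm X)) PmT OmT mulmxA.
rewrite !mulmxBl !mulmxBr.
have e : forall Z : 'M_(b,N), Z *m Pm X *m Om *m Pm X = Z *m Pm X.
  by move=> Z; rewrite -!mulmxA (mulmxA (Pm X)) PmOmPm.
have -> : Fm Y X *m invmx (Fm X X) *m Fm X Y = Y^T *m Om *m Pm X *m Om *m Y.
  by rewrite /Fm PmE !mulmxA.
by rewrite /Fm !mulmxA e subrr subr0.
Qed.

Lemma qr_gram b (W : 'M[R]_(N,b)) (c : 'rV_b) :
  qr (W^T *m Om *m W) c = qr Om (c *m W^T).
Proof. by rewrite /qr trmx_mul trmxK !mulmxA. Qed.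


Lemma Fterm a b c (X : 'M[R]_(N,a)) (Y : 'M[R]_(N,b)) (Z : 'M[R]_(N,c)) :
  Fm Z X *m invmx (Fm X X) *m Fm X Y = Z^T *m Om *m Pm X *m Om *m Y.
Proof. by rewrite /Fm PmE !mulmxA. Qed.

Lemma qr0 n (M : 'M[R]_n) : qr M 0 = 0.
Proof. by rewrite /qr !mul0mx mxE. Qed.

Lemma gram_unit b (W : 'M[R]_(N,b)) :
  (forall c : 'rV_b, qr Om (c *m W^T) = 0 -> c = 0) -> W^T *m Om *m W \in unitmx.
Proof.
move=> h; apply: unit_of_inj => v hv; apply: h.
by rewrite -qr_gram /qr hv !mul0mx mxE.
Qed.

Lemma trZ a b (X : 'M[R]_(N,a)) (Y : 'M[R]_(N,b)) :
  (Y - Pm X *m Om *m Y)^T = Y^T - Y^T *m Om *m X *m invmx (Fm X X) *m X^T.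
Proof.
by rewrite linearB /= trmx_mul (trmx_mul (Pm X)) PmT OmT mulmxA PmE !mulmxA.
Qed.

End LAs.

Section Cx.
Variable R : rcfType.
Local Notation C := R[i].
Local Notation mc := (map_mx (real_complex R)).

Definition qc n (M : 'M[R]_n) (w : 'rV[C]_n) :=
  (w *m mc M *m (map_mx (@conjc R) w)^T) 0 0.

Lemma entry11 (X : 'M[R]_1) : (X^T) 0 0 = X 0 0.
Proof. by rewrite mxE. Qed.

Lemma qcE n (M : 'M[R]_n) (w : 'rV[C]_n) : M^T = M ->
  qc M w = (qr M (map_mx (@complex.Re R) w) + qr M (map_mx (@complex.Im R) w))%:C%C.
Proof.
move=> MT.
set a := map_mx (@complex.Re R) w; set b := map_mx (@complex.Im R) w.
have ew : w = mc a + 'i%C *: mc b.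
  by apply/matrixP => i j; rewrite !mxE [LHS]complexE mulrC.
have ewc : map_mx (@conjc R) w = mc a - 'i%C *: mc b.
  apply/matrixP => i j; rewrite !mxE; case: (w i j) => x y /=.
  by apply/eqP; rewrite eq_complex /= ?mul0r ?mul1r ?mulr0 ?subr0 ?sub0r ?add0r ?eqxx.
pose bf (u v : 'rV[C]_n) := (u *m mc M *m v^T) 0 0.
have bfDl u1 u2 v : bf (u1 + u2) v = bf u1 v + bf u2 v.
  by rewrite /bf !mulmxDl mxE.
have bfDr u v1 v2 : bf u (v1 + v2) = bf u v1 + bf u v2.
  by rewrite /bf linearD /= mulmxDr mxE.
have bfNr u v : bf u (- v) = - bf u v.
  by rewrite /bf linearN /= mulmxN mxE.
have bfZl k u v : bf (k *: u) v = k * bf u v.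
  by rewrite /bf -!scalemxAl mxE.
have bfZr k u v : bf u (k *: v) = k * bf u v.
  by rewrite /bf linearZ /= -scalemxAr mxE.
have bfR x y : bf (mc x) (mc y) = ((x *m M *m y^T) 0 0)%:C%C.
  by rewrite /bf map_trmx -!map_mxM mxE.
have -> : qc M w = bf w (map_mx (@conjc R) w) by [].
rewrite ewc ew bfDl !bfDr !bfNr !bfZl !bfZr !bfR.
have cross : (a *m M *m b^T) 0 0 = (b *m M *m a^T) 0 0.
  by rewrite -entry11 !trmx_mul trmxK MT mulmxA.
rewrite cross /qr rmorphD /=.
have ii : 'i%C * 'i%C = -1 :> C by rewrite -expr2 sqr_i.
set x := (_ *m M *m _) 0 0.
set y := (_ *m M *m _) 0 0.
set z := (_ *m M *m _) 0 0.
rewrite mulrA ii mulN1r opprK addrA subrK.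
by [].
Qed.

End Cx.

Section Spec.
Variable R : rcfType.
Implicit Types s : seq R[i].

Lemma maxE (x y : R[i]) : Num.max x y = if x < y then y else x.
Proof. by []. Qed.

Lemma bigmax_lt1 s : (forall z, z \in s -> `|z| < 1) ->
  \big[Num.max/0]_(z <- s) `|z| < 1.
Proof.
elim: s => [|z s IH] h; first by rewrite big_nil ltr01.
rewrite big_cons maxE; case: ifP => _.
  by apply: IH => y ys; apply: h; rewrite inE ys orbT.
by apply: h; rewrite inE eqxx.
Qed.

Lemma bigmax_le1 s : (forall z, z \in s -> `|z| <= 1) ->
  \big[Num.max/0]_(z <- s) `|z| <= 1.
Proof.
elim: s => [|z s IH] h; first by rewrite big_nil ler01.
rewrite big_cons maxE; case: ifP => _.
  by apply: IH => y ys; apply: h; rewrite inE ys orbT.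
by apply: h; rewrite inE eqxx.
Qed.

Lemma bigmax_eq1 s : (forall z, z \in s -> `|z| <= 1) -> 1 \in s ->
  \big[Num.max/0]_(z <- s) `|z| = 1.
Proof.
elim: s => [|z s IH] h //; rewrite inE big_cons maxE => /orP [/eqP e|hs].
  have := bigmax_le1 (fun y ys => h y (mem_behead ys)).
  by rewrite -e normr1 => /le_gtF ->.
rewrite IH //; last by move=> y ys; apply: h; rewrite inE ys orbT.
case: ifP => // /negbT hz.
have := h z (mem_head _ _); rewrite le_eqVlt (negbTE hz) orbF => /eqP //.
Qed.

End Spec.

Section Abs.
Variable R : rcfType.
Variable N : nat.
Variable Om : 'M[R]_N.
Hypothesis OmT : Om^T = Om.
Hypothesis Om_psd : forall u : 'rV_N, 0 <= qr Om u.
Variables nr ni nv nh : nat.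
Variables (XR : 'M[R]_(N,nr)) (XI : 'M[R]_(N,ni)) (XV : 'M[R]_(N,nv)) (Y : 'M[R]_(N,nh)).
Variables (SR : 'M[R]_(nv,nr)) (SI : 'M[R]_(nv,ni)) (TR : 'M[R]_(nr,nv)) (TI : 'M[R]_(ni,nv)).
Hypothesis hXR : XR = XV *m SR.
Hypothesis hXI : XI = XV *m SI.
Hypothesis hXV : XV = XR *m TR + XI *m TI.
Hypothesis hST : SR *m TR + SI *m TI = 1%:M.
Hypothesis indep : forall (cR : 'rV_nr) (cI : 'rV_ni) (cH : 'rV_nh),
  qr Om (cR *m XR^T + cI *m XI^T + cH *m Y^T) = 0 -> [/\ cR = 0, cI = 0 & cH = 0].

Local Notation Fm := (Fm Om).
Local Notation Pm := (Pm Om).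

Lemma uFR : Fm XR XR \in unitmx.
Proof.
apply: gram_unit => c h.
by have [] := @indep c 0 0; rewrite ?mul0mx ?addr0.
Qed.

Fact Zm_key : unit. Proof. exact: tt. Qed.
Definition Zm := locked_with Zm_key (XI - Pm XR *m Om *m XI).
Lemma ZmE : Zm = XI - Pm XR *m Om *m XI. Proof. by rewrite /Zm unlock. Qed.
Definition Cm := Zm^T *m Om *m Zm.

Lemma zc0 (c : 'rV_ni) : qr Om (c *m Zm^T) = 0 -> c = 0.
Proof.
rewrite ZmE trZ // mulmxBr !mulmxA => h.
have [] := @indep (- (c *m XI^T *m Om *m XR *m invmx (Fm XR XR))) c 0.
  by rewrite mul0mx addr0 mulNmx addrC.
by move=> _ ->.
Qed.


Lemma uC : Cm \in unitmx.
Proof. exact: gram_unit zc0. Qed.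

Lemma uFV : Fm XV XV \in unitmx.
Proof.
apply: gram_unit => c.
rewrite [in X in qr _ X]hXV linearD /= !trmx_mul mulmxDr !mulmxA => h.
have [] := @indep (c *m TR^T) (c *m TI^T) 0.
  by rewrite mul0mx addr0.
move=> e1 e2 _.
by rewrite -[c]mulmx1 -trmx1 -hST linearD /= !trmx_mul mulmxDr !mulmxA e1 e2 !mul0mx addr0.
Qed.

Definition Am := Fm Y Y - Fm Y XR *m invmx (Fm XR XR) *m Fm XR Y.
Definition Bm := Fm Y Y - Fm Y XV *m invmx (Fm XV XV) *m Fm XV Y.
Definition Qm := Fm XI Y - Fm XI XR *m invmx (Fm XR XR) *m Fm XR Y.

Definition WR := Y - Pm XR *m Om *m Y.
Definition WV := Y - Pm XV *m Om *m Y.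

Lemma AmE : Am = WR^T *m Om *m WR.
Proof. exact: schur_gram uFR. Qed.
Lemma BmE : Bm = WV^T *m Om *m WV.
Proof. exact: schur_gram uFV. Qed.

Lemma uA : Am \in unitmx.
Proof.
rewrite AmE; apply: gram_unit => c; rewrite /WR trZ // mulmxBr !mulmxA => h.
have [] := @indep (- (c *m Y^T *m Om *m XR *m invmx (Fm XR XR))) 0 c.
  by rewrite mul0mx addr0 mulNmx addrC.
by move=> _ _ ->.
Qed.

Lemma ZtOmXR : Zm^T *m Om *m XR = 0.
Proof.
have e : XR^T *m (Om *m XR) = Fm XR XR by rewrite /Fm mulmxA.
by rewrite ZmE trZ // !mulmxBl -!mulmxA e (mulVmx uFR) mulmx1 subrr.
Qed.

Lemma ZtOmPR : Zm^T *m Om *m Pm XR = 0.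
Proof. by rewrite PmE // !mulmxA ZtOmXR !mul0mx. Qed.

Lemma ZtOmXI : Zm^T *m Om *m XI = Cm.
Proof.
rewrite /Cm {3}ZmE mulmxBr.
have -> : Zm^T *m Om *m (Pm XR *m Om *m XI) = 0.
  by rewrite !mulmxA ZtOmPR !mul0mx.
by rewrite subr0.
Qed.

Definition Pi := Pm XR + Zm *m invmx Cm *m Zm^T.

Lemma PiOmXR : Pi *m Om *m XR = XR.
Proof.
rewrite /Pi !mulmxDl PmOmX ?uFR // -!mulmxA (mulmxA Zm^T) ZtOmXR.
by rewrite !mulmx0 addr0.
Qed.

Lemma PiOmXI : Pi *m Om *m XI = XI.
Proof.
rewrite /Pi !mulmxDl -!mulmxA (mulmxA Zm^T) ZtOmXI (mulVmx uC) mulmx1.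
by rewrite [X in _ + X]ZmE !mulmxA addrC subrK.
Qed.

Lemma PiOmXV : Pi *m Om *m XV = XV.
Proof.
by rewrite [in LHS]hXV mulmxDr !mulmxA PiOmXR PiOmXI -hXV.
Qed.

Lemma PiT : Pi^T = Pi.
Proof.
rewrite /Pi linearD /= PmT // !trmx_mul trmxK trmx_inv /Cm !trmx_mul trmxK OmT.
by rewrite !mulmxA.
Qed.

Lemma PiK : exists K : 'M[R]_(nv,N), Pi = XV *m K.
Proof.
exists (SR *m invmx (Fm XR XR) *m XR^T +
  (SI - SR *m invmx (Fm XR XR) *m XR^T *m Om *m XI) *m invmx Cm *m Zm^T).
rewrite /Pi PmE ZmE PmE mulmxDr !mulmxA -hXR.
congr (_ + _); rewrite mulmxBr !mulmxA -hXI -hXR.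
by [].
Qed.

Lemma PiE : Pi = Pm XV.
Proof.
have [K eK] := PiK.
have e1 : Pi *m Om *m Pm XV = Pm XV by rewrite PmE !mulmxA PiOmXV.
have e2 : Pm XV *m Om *m Pi = Pi.
  have e : XV^T *m (Om *m (XV *m K)) = Fm XV XV *m K by rewrite /Fm !mulmxA.
  by rewrite {1}eK PmE -!mulmxA e (mulmxA (invmx _)) (mulVmx uFV) mul1mx -eK.
by rewrite -{1}PiT -e2 !trmx_mul PiT OmT PmT // mulmxA.
Qed.

Lemma QmE : Qm = Zm^T *m Om *m Y.
Proof.
by rewrite /Qm Fterm ZmE trZ // /Fm PmE !mulmxBl !mulmxA.
Qed.

Lemma AmBm : Am - Bm = Qm^T *m invmx Cm *m Qm.
Proof.
rewrite /Am /Bm !Fterm opprB addrC addrA subrK -PiE /Pi mulmxDr !mulmxDl.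
rewrite addrC addKr QmE !trmx_mul trmxK OmT.
by rewrite !mulmxA.
Qed.


Lemma CmT : Cm^T = Cm.
Proof. by rewrite /Cm !trmx_mul trmxK OmT mulmxA. Qed.

Lemma gramT b (W : 'M[R]_(N,b)) : (W^T *m Om *m W)^T = W^T *m Om *m W.
Proof. by rewrite !trmx_mul trmxK OmT mulmxA. Qed.

Lemma AmT : Am^T = Am. Proof. by rewrite AmE gramT. Qed.
Lemma BmT : Bm^T = Bm. Proof. by rewrite BmE gramT. Qed.

Lemma qrA_ge0 a : 0 <= qr Am a.
Proof. by rewrite AmE qr_gram. Qed.
Lemma qrB_ge0 a : 0 <= qr Bm a.
Proof. by rewrite BmE qr_gram. Qed.

Lemma qrA0 (c : 'rV_nh) : qr Am c = 0 -> c = 0.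
Proof.
rewrite AmE qr_gram /WR trZ // mulmxBr !mulmxA => h.
have [] := @indep (- (c *m Y^T *m Om *m XR *m invmx (Fm XR XR))) 0 c.
  by rewrite mul0mx addr0 mulNmx addrC.
by move=> _ _ ->.
Qed.

Lemma qrAB (c : 'rV_nh) :
  qr (Am - Bm) c = qr Om ((c *m Qm^T *m invmx Cm) *m Zm^T).
Proof.
set s := c *m Qm^T *m invmx Cm.
have hu : c *m Qm^T = s *m Cm by rewrite /s -mulmxA (mulVmx uC) mulmx1.
rewrite -qr_gram -/Cm AmBm /qr !mulmxA -/s -mulmxA.
have -> : Qm *m c^T = (c *m Qm^T)^T by rewrite trmx_mul trmxK.
by rewrite hu trmx_mul CmT /Cm !mulmxA.
Qed.

Lemma qrAB_ge0 c : 0 <= qr (Am - Bm) c.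
Proof. by rewrite qrAB. Qed.

Lemma qrAB0 c : qr (Am - Bm) c = 0 -> c *m Qm^T = 0.
Proof.
rewrite qrAB => /zc0 h.
by rewrite -[c *m Qm^T]mulmx1 -(mulVmx uC) mulmxA h mul0mx.
Qed.

Lemma qrB n (M1 M2 : 'M[R]_n) c : qr (M1 - M2) c = qr M1 c - qr M2 c.
Proof. by rewrite /qr mulmxBr mulmxBl !mxE. Qed.


Definition Jm := invmx Am *m Bm.
Local Notation mc := (map_mx (real_complex R)).

Lemma cplx0 n (w : 'rV[R[i]]_n) :
  map_mx (@complex.Re R) w = 0 -> map_mx (@complex.Im R) w = 0 -> w = 0.
Proof.
move=> ha hb; apply/matrixP => i j.
have := congr1 (fun m : 'M_(1,n) => m i j) ha; have := congr1 (fun m : 'M_(1,n) => m i j) hb.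
rewrite !mxE; case: (w i j) => x y /= -> ->.
by [].
Qed.

Lemma eig_bound (z : R[i]) (v : 'rV[R[i]]_nh) : v != 0 ->
  v *m mc Jm = z *: v ->
  exists t : R, [/\ z = (t%:C)%C, 0 <= t, t <= 1 & (row_free Qm^T -> t < 1)].
Proof.
move=> v0 hv.
have uAc : mc Am \in unitmx by rewrite map_unitmx uA.
set w := v *m invmx (mc Am).
have vw : v = w *m mc Am by rewrite /w -mulmxA (mulVmx uAc) mulmx1.
have w0 : w != 0 by apply: contraNneq v0 => e; rewrite vw e mul0mx.
have hwB : w *m mc Bm = z *: (w *m mc Am).
  by rewrite -vw -hv /Jm map_mxM map_invmx /w mulmxA.
have key : qc Bm w = z * qc Am w.
  by rewrite /qc hwB -scalemxAl mxE.
rewrite !qcE ?AmT ?BmT // in key.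
set a := map_mx (@complex.Re R) w in key.
set b := map_mx (@complex.Im R) w in key.
set al := qr Am a + qr Am b in key.
set be := qr Bm a + qr Bm b in key.
have Aa := qrA_ge0 a; have Ab := qrA_ge0 b.
have hab : (a != 0) || (b != 0).
  apply: contraNT w0; rewrite negb_or !negbK => /andP [/eqP ha /eqP hb].
  by rewrite (cplx0 ha hb).
have al_gt0 : 0 < al.
  rewrite lt_def addr_ge0 // andbT paddr_eq0 // negb_and.
  case/orP: hab => h; apply/orP; [left|right]; apply: contra h => /eqP h;
    by rewrite (qrA0 h).
have be_ge0 : 0 <= be by rewrite addr_ge0 // qrB_ge0.
have ABa := qrAB_ge0 a; have ABb := qrAB_ge0 b.
have hdiff : al - be = qr (Am - Bm) a + qr (Am - Bm) b.
  by rewrite [qr (Am - Bm) a]qrB [qr (Am - Bm) b]qrB /al /be; ring.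
have le_ba : be <= al by rewrite -subr_ge0 hdiff addr_ge0.
have alC0 : (al%:C)%C != 0 by rewrite eq_complex /= gt_eqF.
have ez : z = ((be / al)%:C)%C.
  apply: (mulIf alC0); rewrite -key -rmorphM /= divfK //.
  by rewrite gt_eqF.
exists (be / al); split => //.
- by rewrite divr_ge0 // ltW.
- by rewrite ler_pdivrMr // mul1r.
move=> rf; rewrite ltr_pdivrMr // mul1r lt_neqAle le_ba andbT.
apply/eqP => e.
have : qr (Am - Bm) a + qr (Am - Bm) b == 0 by rewrite -hdiff e subrr.
rewrite paddr_eq0 // => /andP [/eqP /qrAB0 ha /eqP /qrAB0 hb].
by move: hab; rewrite -!(mulmx_free_eq0 _ rf) ha hb eqxx.
Qed.

Lemma eig1 : ~~ row_free Qm^T -> exists2 u : 'rV[R]_nh, u *m Jm = u & u != 0.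
Proof.
rewrite -kermx_eq0 => /rowV0Pn [v /sub_kermxP hv v0].
exists (v *m Am).
  have e : v *m (Am - Bm) = 0 by rewrite AmBm !mulmxA hv !mul0mx.
  move: e; rewrite mulmxBr => /eqP; rewrite subr_eq0 => /eqP e.
  by rewrite /Jm mulmxA -(mulmxA v) (mulmxV uA) mulmx1 e.
apply: contra v0 => /eqP e.
by rewrite -[v]mulmx1 -(mulmxV uA) mulmxA e mul0mx.
Qed.

Theorem abs_main : nh = ni ->
  (\rank Qm = ni -> spectral_radius Jm < 1) /\
  (\rank Qm <> ni -> spectral_radius Jm = 1).
Proof.
move=> hn.
have rfE : row_free Qm^T = (\rank Qm == ni).
  by rewrite /row_free mxrank_tr; congr (_ == _).
rewrite /spectral_radius; case: closed_field_poly_normal => s /= hs.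
have lc : lead_coef (char_poly (map_mx (fun a : R => (a%:C)%C) Jm)) != 0.
  by rewrite (monicP (char_poly_monic _)) oner_neq0.
have memE z : (z \in s) = eigenvalue (map_mx (real_complex R) Jm) z.
  by rewrite eigenvalue_root_char hs rootZ // root_prod_XsubC.
have bnd z : z \in s ->
    exists t, [/\ z = (t%:C)%C, 0 <= t, t <= 1 & (row_free Qm^T -> t < 1)].
  by rewrite memE => /eigenvalueP [v hv v0]; exact: eig_bound v0 hv.
split => hr.
  apply: bigmax_lt1 => z /bnd [t [-> t0 t1 tlt]].
  rewrite ger0_norm ?ler0c // ltcR; apply: tlt; by rewrite rfE hr eqxx.
apply: bigmax_eq1 => [z /bnd [t [-> t0 t1 _]]|].
  by rewrite ger0_norm ?ler0c // lecR.
rewrite memE; apply/eigenvalueP.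
have [u hu u0] : exists2 u : 'rV[R]_nh, u *m Jm = u & u != 0.
  by apply: eig1; rewrite rfE; apply/eqP.
exists (map_mx (real_complex R) u); first by rewrite -map_mxM hu scale1r.
by rewrite map_mx_eq0.
Qed.

End Abs.

Section Conc.
Variables (d : nat) (r : 'I_d -> nat) (M : {set 'I_d}).
Local Notation cell := (cell r M).
Variable R : rcfType.

Lemma card_hcols (H : seq (iblock r M)) : uniq H ->
  {in H &, forall b c, b != c -> [disjoint bcols b & bcols c]} ->
  #|hcols H| = (\sum_(b <- H) #|bcols b|)%N.
Proof.
elim: H => [|b H IH] /=; first by rewrite /hcols !big_nil cards0.
move=> /andP [bH uH] hd.
rewrite /hcols !big_cons -/(hcols H) cardsU.
have -> : bcols b :&: hcols H = set0.
  apply: disjoint_setI0; rewrite /hcols bigcup_seq; apply: bigcup_disjoint => c cH.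
  apply: hd; rewrite ?inE ?eqxx ?cH ?orbT //.
  by apply: contraNneq bH => ->.
rewrite cards0 subn0 IH //.
by move=> x y xH yH; apply: hd; rewrite inE ?xH ?yH orbT.
Qed.


Lemma sum_delta n (k : 'I_n) (f : 'I_n -> R) : \sum_i (i == k)%:R * f i = f k.
Proof.
rewrite (bigD1 k) //= eqxx mul1r big1 ?addr0 // => i /negbTE ->.
by rewrite mul0r.
Qed.

Definition zfun : {dffun forall j : 'I_d, 'I_(r j).+1} :=
  @finfun _ (fun j => 'I_(r j).+1) (fun j => ord0).

Lemma zfun_ok : [forall j, (j \notin M) ==> (nat_of_ord (zfun j) == 0%N)].
Proof. by apply/forallP => j; rewrite /zfun ffunE implybT. Qed.

Definition zcell : cell := exist _ zfun zfun_ok.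

Lemma cell_eq (x y : cell) :
  (forall j, nat_of_ord (val x j) = nat_of_ord (val y j)) -> x = y.
Proof. by move=> h; apply: val_inj; apply/ffunP => j; apply: val_inj; exact: h. Qed.

Lemma Gentry_agree (y x : cell) : Gentry R y x != 0 ->
  forall j, j \in supp x -> nat_of_ord (val y j) = nat_of_ord (val x j).
Proof.
move=> g j js; apply/eqP; apply: contraNT g => ne.
by rewrite /Gentry (bigD1 j) //= (negbTE ne) mul0r.
Qed.

Lemma Gentry_xx (x : cell) : Gentry R x x = 1.
Proof. by rewrite /Gentry big1 // => j _; rewrite eqxx. Qed.

Lemma Gentry_z (x : cell) : supp x != set0 -> Gentry R zcell x = 0.
Proof.
case/set0Pn => j js; rewrite /Gentry (bigD1 j) //=.
move: js; rewrite inE /zcell /= /zfun ffunE /= eq_sym => /negbTE ->.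
by rewrite mul0r.
Qed.

Lemma cell_indep (f : cell -> R) : (forall x, supp x == set0 -> f x = 0) ->
  forall m, (forall y, \sum_x f x * Gentry R y x = m) -> forall x, f x = 0.
Proof.
move=> hf m h.
have m0 : m = 0.
  rewrite -(h zcell) big1 // => x _.
  case: (eqVneq (supp x) set0) => [e|ne]; first by rewrite hf ?e ?eqxx // mul0r.
  by rewrite Gentry_z // mulr0.
suff H : forall n x, (#|supp x| <= n)%N -> f x = 0 by move=> x; exact: (H _ x (leqnn _)).
elim => [|n IH] x hx.
  by apply: hf; rewrite -cards_eq0 -leqn0.
have := h x; rewrite m0 (bigD1 x) //= Gentry_xx mulr1 big1 ?addr0 // => x' ne.
case: (eqVneq (Gentry R x x') 0) => [->|g0]; first by rewrite mulr0.
rewrite IH ?mul0r //.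
have ag := Gentry_agree g0.
have sub : supp x' \proper supp x.
  rewrite properEneq; apply/andP; split.
    apply: contra ne => /eqP es; apply/eqP; apply: cell_eq => j.
    case: (boolP (j \in supp x')) => js; first by rewrite (ag j js).
    have jx : j \notin supp x by rewrite -es.
    by move: js jx; rewrite !inE !negbK => /eqP -> /eqP ->.
  apply/subsetP => j js; have := ag j js; move: js; rewrite !inE => js e.
  by rewrite e.
by rewrite -ltnS (leq_trans (proper_card sub)).
Qed.

Definition sel (A B : {set cell}) : 'M[R]_(#|A|, #|B|) :=
  \matrix_(k, j) ((enum_val k == enum_val j)%:R).

Lemma sum_sel (A : {set cell}) (F : cell -> R) c :
  \sum_(k < #|A|) F (enum_val k) * ((enum_val k == c)%:R) = (c \in A)%:R * F c.
Proof.
rewrite -(big_enum_val (fun x => F x * (x == c)%:R)).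
case: (boolP (c \in A)) => cA.
  rewrite (bigD1 c) //= eqxx mulr1 mul1r big1 ?addr0 // => x /andP [_ /negbTE ->].
  by rewrite mulr0.
rewrite mul0r big1 // => x xA; case: eqP => [e|_]; last by rewrite mulr0.
by move: cA; rewrite -e xA.
Qed.

Lemma Gsel (A B : {set cell}) : B \subset A ->
  @Gmx d r M R B = @Gmx d r M R A *m sel A B.
Proof.
move=> sBA; apply/matrixP => i j; rewrite !mxE.
under eq_bigr => k _ do rewrite !mxE.
by rewrite sum_sel (subsetP sBA _ (enum_valP j)) mul1r.
Qed.

Definition coefA (A : {set cell}) (c : 'rV[R]_#|A|) (x : cell) :=
  \sum_k c 0 k * ((enum_val k == x)%:R).

Lemma rowcomb (A : {set cell}) (c : 'rV[R]_#|A|) i :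
  (c *m (@Gmx d r M R A)^T) 0 i = \sum_x coefA c x * Gentry R (enum_val i) x.
Proof.
rewrite mxE /coefA.
under [RHS]eq_bigr => x _ do rewrite mulr_suml.
rewrite exchange_big /=; apply: eq_bigr => k _; rewrite !mxE.
rewrite (bigD1 (enum_val k)) //= eqxx mulr1 big1 ?addr0 // => x /negbTE.
by rewrite eq_sym => ->; rewrite mulr0 mul0r.
Qed.

Lemma coefA_val (A : {set cell}) (c : 'rV[R]_#|A|) k : coefA c (enum_val k) = c 0 k.
Proof.
rewrite /coefA (bigD1 k) //= eqxx mulr1 big1 ?addr0 // => k' /negbTE ne.
by rewrite (inj_eq (@enum_val_inj _ _)) ne mulr0.
Qed.

Lemma coefA_out (A : {set cell}) (c : 'rV[R]_#|A|) x : x \notin A -> coefA c x = 0.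
Proof.
move=> xA; rewrite /coefA big1 // => k _; case: eqP => [e|_]; last by rewrite mulr0.
by move: xA; rewrite -e enum_valP.
Qed.

Variable pi : cell -> R.
Hypothesis pi_pos : forall x, 0 < pi x.
Hypothesis pi_sum : \sum_x pi x = 1.

Local Notation N := #|{: cell}|.
Local Notation Om := (Omega pi).
Definition pp (i : 'I_N) := pi (enum_val i).

Lemma sum_pp : \sum_i pp i = 1.
Proof.
rewrite -pi_sum /pp -(big_enum_val (A := {: cell}) pi).
by apply: eq_bigl => x; rewrite inE.
Qed.

Lemma OmT : Om^T = Om.
Proof.
apply/matrixP => i k; rewrite !mxE.
case: (eqVneq i k) => [->|ne] //.
by rewrite !mul0r !sub0r mulrC.
Qed.

Lemma qrOm (u : 'rV[R]_N) :
  qr Om u = \sum_i pp i * (u 0 i - \sum_k pp k * u 0 k) ^+ 2.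
Proof.
set m := \sum_k pp k * u 0 k.
have e1 : qr Om u = \sum_k (u 0 k * pp k * u 0 k - m * pp k * u 0 k).
  rewrite /qr mxE; apply: eq_bigr => k _; rewrite !mxE.
  have -> : \sum_j u 0 j * Om j k =
            \sum_j ((j == k)%:R * (u 0 j * pp j) - u 0 j * pp j * pp k).
    by apply: eq_bigr => j _; rewrite !mxE /pp; ring.
  rewrite sumrB sum_delta -mulr_suml.
  have -> : \sum_i u 0 i * pp i = m by apply: eq_bigr => i _; rewrite mulrC.
  by rewrite mulrBl.
have hm : \sum_i pp i * u 0 i = m by [].
clearbody m.
rewrite e1 sumrB.
have -> : \sum_k (m * pp k * u 0 k) = m * m.
  by rewrite -{3}hm mulr_sumr; apply: eq_bigr => k _; rewrite mulrA.
have -> : \sum_i pp i * (u 0 i - m) ^+ 2 =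
   \sum_i (u 0 i * pp i * u 0 i) - 2%:R * m * (\sum_i pp i * u 0 i) + m * m * (\sum_i pp i).
  rewrite mulr_sumr mulr_sumr -sumrB -big_split /=.
  by apply: eq_bigr => i _; ring.
rewrite sum_pp hm; ring.
Qed.

Lemma Om_psd (u : 'rV[R]_N) : 0 <= qr Om u.
Proof.
rewrite qrOm; apply: sumr_ge0 => i _.
by rewrite mulr_ge0 ?sqr_ge0 // ltW // pi_pos.
Qed.

Lemma Om_const (u : 'rV[R]_N) : qr Om u = 0 ->
  forall i, u 0 i = \sum_k pp k * u 0 k.
Proof.
rewrite qrOm => /eqP; rewrite psumr_eq0 => [/allP h i|i _]; last first.
  by rewrite mulr_ge0 ?sqr_ge0 // ltW // pi_pos.
have := h i (mem_index_enum _); rewrite mulf_eq0 gt_eqF ?pi_pos //=.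
by rewrite sqrf_eq0 subr_eq0 => /eqP.
Qed.

Variables (V I : {set {set 'I_d}}).
Hypothesis V_ok : forall v, v \in V -> (v != set0) && (v \subset M).
Hypothesis IV : I \subset V.
Variable H : seq (iblock r M).
Hypothesis H_ok : forall b, b \in H -> iblock_ok b && (ib_v b \notin V).

Local Notation RR := (V :\: I).
Local Notation XR := (@Gmx d r M R (cols r M RR)).
Local Notation XI := (@Gmx d r M R (cols r M I)).
Local Notation XV := (@Gmx d r M R (cols r M V)).
Local Notation Y := (@Gmx d r M R (hcols H)).

Lemma hcols_supp x : x \in hcols H -> (supp x \notin V) && (supp x != set0).
Proof.
rewrite /hcols bigcup_seq => /bigcupP [b bH]; rewrite inE => /andP [/eqP -> _].
have /andP [ok nV] := H_ok bH.
by move: ok; rewrite /iblock_ok => /and3P [ne _ _]; rewrite nV ne.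
Qed.

Lemma inR x : x \in cols r M RR -> [/\ supp x \in V, supp x \notin I & supp x != set0].
Proof.
rewrite inE inE => /andP [nI inV]; split => //.
by have /andP [] := V_ok inV.
Qed.

Lemma inI x : x \in cols r M I -> [/\ supp x \in V, supp x \in I & supp x != set0].
Proof.
rewrite inE => xI; have inV := subsetP IV _ xI; split => //.
by have /andP [] := V_ok inV.
Qed.

Lemma indepC (cR : 'rV[R]_#|cols r M RR|) (cI : 'rV[R]_#|cols r M I|)
  (cH : 'rV[R]_#|hcols H|) :
  qr Om (cR *m XR^T + cI *m XI^T + cH *m Y^T) = 0 -> [/\ cR = 0, cI = 0 & cH = 0].
Proof.
move=> h0; have hc := Om_const h0.
set f := fun x => coefA cR x + coefA cI x + coefA cH x.
have hG : forall y, \sum_x f x * Gentry R y x =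
    \sum_k pp k * (cR *m XR^T + cI *m XI^T + cH *m Y^T) 0 k.
  move=> y; rewrite -(hc (enum_rank y)) 2!mxE !rowcomb enum_rankK -!big_split /=.
  by apply: eq_bigr => x _; rewrite /f !mulrDl.
have hf : forall x, supp x == set0 -> f x = 0.
  move=> x /eqP x0; rewrite /f !coefA_out ?addr0 //.
  - by apply/negP => /hcols_supp; rewrite x0 eqxx andbF.
  - by apply/negP => /inI [_ _]; rewrite x0 eqxx.
  - by apply/negP => /inR [_ _]; rewrite x0 eqxx.
have f0 := cell_indep hf hG.
split; apply/rowP => k; rewrite mxE; have := f0 (enum_val k); rewrite /f.
- have [sV sI s0] := inR (enum_valP k).
  rewrite coefA_val !coefA_out ?addr0 //.
  + by apply/negP => /hcols_supp; rewrite sV.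
  + by apply/negP => /inI [_]; rewrite (negbTE sI).
- have [sV sI s0] := inI (enum_valP k).
  rewrite coefA_val !coefA_out ?addr0 ?add0r //.
  + by apply/negP => /hcols_supp; rewrite sV.
  + by apply/negP => /inR [_]; rewrite sI.
- have /andP [sV s0] := hcols_supp (enum_valP k).
  rewrite coefA_val !coefA_out ?add0r //.
  + by apply/negP => /inI [sV']; rewrite (negbTE sV) in sV'.
  + by apply/negP => /inR [sV']; rewrite (negbTE sV) in sV'.
Qed.

Lemma subR : cols r M RR \subset cols r M V.
Proof. by apply/subsetP => x /inR []; rewrite inE. Qed.
Lemma subI : cols r M I \subset cols r M V.
Proof. by apply/subsetP => x /inI []; rewrite inE. Qed.

Lemma inV_split x : x \in cols r M V ->
  (x \in cols r M RR)%:R + (x \in cols r M I)%:R = 1 :> R.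
Proof.
rewrite !inE => xV; rewrite xV andbT.
by case: (supp x \in I); rewrite ?addr0 ?add0r.
Qed.

Lemma hXVC : XV = XR *m sel (cols r M RR) (cols r M V) + XI *m sel (cols r M I) (cols r M V).
Proof.
apply/matrixP => i j; rewrite !mxE.
under eq_bigr => k _ do rewrite !mxE.
under [X in _ = _ + X]eq_bigr => k _ do rewrite !mxE.
rewrite !sum_sel -mulrDl inV_split ?mul1r //.
exact: enum_valP.
Qed.

Lemma hSTC : sel (cols r M V) (cols r M RR) *m sel (cols r M RR) (cols r M V) +
   sel (cols r M V) (cols r M I) *m sel (cols r M I) (cols r M V) = 1%:M.
Proof.
apply/matrixP => k k'; rewrite !mxE.
under eq_bigr => j _ do rewrite !mxE.
under [X in _ + X = _]eq_bigr => j _ do rewrite !mxE.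
rewrite (sum_sel _ (fun y => (enum_val k == y)%:R)) (sum_sel _ (fun y => (enum_val k == y)%:R)).
rewrite -mulrDl inV_split ?mul1r ?enum_valP //.
by rewrite (inj_eq (@enum_val_inj _ _)).
Qed.

End Conc.

Theorem lemma4 (R : rcfType) (d : nat) (r : 'I_d -> nat) (M : {set 'I_d})
    (pi : cell r M -> R)
    (pi_pos : forall x, 0 < pi x)
    (pi_sum : \sum_x pi x = 1)
    (V I : {set {set 'I_d}})
    (V_ok : forall v, v \in V -> (v != set0) && (v \subset M))
    (IV : I \subset V)
    (H : seq (iblock r M))
    (H_ok : forall b, b \in H -> iblock_ok b && (ib_v b \notin V))
    (H_uniq : uniq H)
    (H_disj : {in H &, forall b c, b != c -> [disjoint bcols b & bcols c]})
    (H_card : (\sum_(b <- H) #|bcols b| = #|cols r M I|)%N) :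
  (\rank (Qmx pi I (V :\: I) H) = #|cols r M I| ->
     spectral_radius (Jmx pi V I H) < 1) /\
  (\rank (Qmx pi I (V :\: I) H) <> #|cols r M I| ->
     spectral_radius (Jmx pi V I H) = 1).
Proof.
have hn : #|hcols H| = #|cols r M I| by rewrite card_hcols // H_card.
have h := (@abs_main R _ (Omega pi) (OmT pi) (Om_psd pi_pos pi_sum)
  _ _ _ _ _ _ _ _ _ _ _ _
  (Gsel R (subR r I V_ok)) (Gsel R (subI r V_ok IV)) (hXVC r M R V I) (hSTC r M R V I)
  (indepC pi_pos pi_sum V_ok IV H_ok) hn).
exact h.
Qed.
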